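(* Let $S=\{1,\ldots,K\}$, $K>1$, let $T\ge 1$, and let $p$ be the distribution of any first order Markov chain on $S^T$ (for a path $s^T=(s_1,\ldots,s_T)\in S^T$ and $1\le m\le n\le T$, $p(s_m^n)$ denotes the marginal probability that the chain takes values $(s_m,\ldots,s_n)$ at times $m,\ldots,n$). For a positive integer $k\le T$ define $$\bar U_k(s^T):=\prod_{j=1-k}^{T-1}p\big(s_{(j+1)\vee 1}^{(j+k)\wedge T}\big),\qquad \bar R_k(s^T):=-\frac{1}{T}\ln \bar U_k(s^T),$$ and $\bar R_\infty(s^T):=-\frac{1}{T}\log p(s^T)$. Let $k$ be such that $T\geq k>1$. Then $$\bar R_k(s^T)=\bar R_{\infty}(s^T)+\bar R_{k-1}(s^T)\quad\text{for all } s^T\in S^T.$$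
   Context: Here $a\vee b=\max\{a,b\}$ and $a\wedge b=\min\{a,b\}$. For $k=1$, $\bar R_1(s^T)=-\frac1T\sum_{t=1}^T\log p(s_t)$ (log-pseudo-likelihood risk). Equivalently, $\bar U_k(s^T)=p(s^T)\,\bar U_{k-1}(s^T)$. *)

(* Defs.v *)
From HB Require Import structures.
From mathcomp Require Import all_boot all_order all_algebra.
From mathcomp Require Import reals constructive_ereal exp.
Set Implicit Arguments. Unset Strict Implicit. Unset Printing Implicit Defensive.
Import Order.TTheory GRing.Theory Num.Theory.
Local Open Scope ring_scope.

(* Paths s^T in S^T with S = {1..K} represented by 'I_K (state i+1 <-> i),
   time t in {1..T} represented by the ordinal t-1 : 'I_T. *)
Definition spath (K T : nat) := {ffun 'I_T -> 'I_K}.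

Definition is_distribution (R : realType) K T (p : spath K T -> R) : Prop :=
  (forall x, 0 <= p x) /\ \sum_(x : spath K T) p x = 1.

Definition marg (R : realType) K T (p : spath K T -> R) (s : spath K T) (m n : nat) : R :=
  \sum_(x : spath K T | [forall i : 'I_T, ((m <= i.+1 <= n)%N) ==> (x i == s i)]) p x.

(* first-order Markov property: for 1 <= t < T and every path x,
   P(X_{t+1}=x_{t+1} | X_1^t = x_1^t) = P(X_{t+1}=x_{t+1} | X_t = x_t),
   written multiplicatively (so that it is meaningful for null events):
   p(x_1^{t+1}) p(x_t) = p(x_1^t) p(x_t^{t+1}). *)
Definition is_markov (R : realType) K T (p : spath K T -> R) : Prop :=
  forall (x : spath K T) (t : nat), (1 <= t)%N -> (t < T)%N ->
    marg p x 1 t.+1 * marg p x t t = marg p x 1 t * marg p x t t.+1.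

(* \bar U_k(s^T) = prod_{j=1-k}^{T-1} p(s_{(j+1) v 1}^{(j+k) ^ T}),
   reindexed by i = j + k, i = 1, ..., T+k-1 *)
Definition Ubar (R : realType) K T (p : spath K T -> R) (k : nat) (s : spath K T) : R :=
  \prod_(1 <= i < T + k) marg p s (maxn (i.+1 - k) 1) (minn i T).

Definition negloglik (R : realType) (T : nat) (u : R) : \bar R :=
  if u == 0 then +oo%E else (- (T%:R^-1 * ln u))%:E.

Definition Rbar_k (R : realType) K T (p : spath K T -> R) (k : nat) (s : spath K T) : \bar R :=
  negloglik T (Ubar p k s).

Definition Rbar_inf (R : realType) K T (p : spath K T -> R) (s : spath K T) : \bar R :=
  negloglik T (p s).

(* Main.v *)
Require Import Defs.
From HB Require Import structures.
From mathcomp Require Import all_boot all_order all_algebra.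
From mathcomp Require Import reals constructive_ereal exp.
From mathcomp Require Import zify ring.
Import Order.TTheory GRing.Theory Num.Theory.
Local Open Scope ring_scope.

Section S.
Variables (R : realType) (K T : nat) (p : spath K T -> R).

Definition agree (x y : spath K T) m n :=
  [forall i : 'I_T, ((m <= i.+1 <= n)%N) ==> (x i == y i)].

Lemma marg_split (s : spath K T) a b : (a <= b.+1)%N ->
  marg p s a b = \sum_(z | agree z s a T) marg p z 1 b.
Proof.
move=> hab; rewrite /marg.
under [RHS]eq_bigr do rewrite big_mkcond.
rewrite exchange_big /= [LHS]big_mkcond /=.
apply: eq_bigr => x _.
rewrite -big_mkcondr /=.
case hx: [forall i : 'I_T, ((a <= i.+1 <= b)%N) ==> (x i == s i)].
- rewrite (big_pred1 [ffun i : 'I_T => if (i.+1 < a)%N then x i else s i]) //.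
  move=> z /=; apply/idP/idP.
  + case/andP=> /forallP Cz /forallP Az; apply/eqP/ffunP => i; rewrite ffunE.
    case: ifP => hi.
    * by apply/esym/eqP; move: (Az i); rewrite /= (_ : (i < b)%N) //; lia.
    * by apply/eqP; move: (Cz i); rewrite (_ : (a <= i.+1 <= T)%N) //; move: (ltn_ord i); lia.
  + move/eqP=> ->; apply/andP; split; apply/forallP => i; apply/implyP => hi; rewrite ffunE.
    * by rewrite ifN //; lia.
    * case: ifP => // hia; move/forallP: hx => /(_ i) /implyP; apply; lia.
- rewrite big1 // => z /andP [/forallP Cz /forallP Az].
  move/negbT: hx => /negP; case; apply/forallP => i; apply/implyP => hi.
  move: (Az i) (Cz i); rewrite (_ : (i < b)%N); last by lia.
  rewrite (_ : (a <= i.+1 <= T)%N); last by move: (ltn_ord i); lia.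
  by move=> /eqP -> /eqP ->.
Qed.

Lemma marg_congr (s z : spath K T) a m n : agree z s a T -> (a <= m)%N ->
  marg p z m n = marg p s m n.
Proof.
move=> /forallP C ham; apply: eq_bigl => x; apply: eq_forallb => i.
case hi: (m <= i.+1 <= n)%N => //=.
move: (C i); rewrite (_ : (a <= i.+1 <= T)%N); last by move: (ltn_ord i); lia.
by move=> /eqP ->.
Qed.

Lemma markov_gen (s : spath K T) a t : is_markov p -> (1 <= a)%N -> (a <= t)%N -> (t < T)%N ->
  marg p s a t.+1 * marg p s t t = marg p s a t * marg p s t t.+1.
Proof.
move=> M h1 h2 h3.
have E1 := @marg_split s a t.+1. have E2 := @marg_split s a t.
rewrite E1 ?E2; try lia.
rewrite !mulr_suml; apply: eq_bigr => z Cz.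
rewrite -(@marg_congr s z a t t Cz) // -(@marg_congr s z a t t.+1 Cz) //.
apply: M => //; lia.
Qed.

Lemma marg_mono (s : spath K T) m c n : (forall x, 0 <= p x) -> (m <= c <= n)%N ->
  marg p s m n <= marg p s c c.
Proof.
move=> p0 hc; rewrite /marg [X in X <= _]big_mkcond [X in _ <= X]big_mkcond.
apply: ler_sum => x _.
case: ifP => [/forallP P|_]; last by case: ifP.
rewrite ifT //; apply/forallP => i; apply/implyP => hi; apply: (implyP (P i)); lia.
Qed.

Lemma marg_ge0 (s : spath K T) m n : (forall x, 0 <= p x) -> 0 <= marg p s m n.
Proof. by move=> p0; apply: sumr_ge0. Qed.

Lemma marg_full (s : spath K T) : marg p s 1 T = p s.
Proof.
rewrite /marg (big_pred1 s) // => x /=; apply/forallP/eqP.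
- move=> H; apply/ffunP => i; move: (H i); rewrite (_ : (i < T)%N) //.
  by move/eqP.
- by move=> -> i; apply/implyP.
Qed.

End S.
Section M.
Variables (R : realType) (K T : nat) (p : spath K T -> R) (s : spath K T).
Hypothesis HM : is_markov p.
Hypothesis Hpos : forall t, (1 <= t <= T)%N -> marg p s t t != 0.
Local Notation W := (marg p s).
Definition rr a := W a.-1 a / W a a.

Lemma stepA a b : (1 <= a)%N -> (a <= b)%N -> (b < T)%N ->
  W a b.+1 = W a b * (W b b.+1 / W b b).
Proof.
move=> h1 h2 h3; have nz : W b b != 0 by apply: Hpos; lia.
by rewrite mulrA -(@markov_gen R K T p s a b HM h1 h2 h3) mulfK.
Qed.

Lemma stepB a n : (2 <= a)%N -> (a + n <= T)%N ->
  W a.-1 (a + n) = W a (a + n) * rr a.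
Proof.
move=> h1; elim: n => [|n IH] h2.
  rewrite addn0 /rr mulrC divfK //; apply: Hpos; lia.
rewrite addnS stepA; try lia.
rewrite IH; last lia.
rewrite (@stepA a (a+n)); try lia.
by rewrite /rr; ring.
Qed.

Lemma stepC n : (n < T)%N ->
  W (T - n) T = W T T * \prod_((T - n).+1 <= j < T.+1) rr j.
Proof.
elim: n => [|n IH] h.
  by rewrite subn0 big_geq // mulr1.
have E : (T - n = (T - n.+1).+1)%N by lia.
have E2 : (T - n.+1 = (T - n).-1)%N by lia.
have := @stepB (T - n) (n) _ _; rewrite (_ : (T - n + n = T)%N); last lia.
rewrite E2 => -> //; try lia.
rewrite IH; last lia.
rewrite (_ : (T - n).-1.+1 = T - n)%N; last lia.
rewrite [in RHS]big_ltn; last lia.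
by rewrite -mulrA [_ * rr _]mulrC.
Qed.
End M.
Section M2.
Variables (R : realType) (K T : nat) (p : spath K T -> R) (s : spath K T).
Hypothesis HM : is_markov p.
Hypothesis Hpos : forall t, (1 <= t <= T)%N -> marg p s t t != 0.
Local Notation W := (marg p s).

Lemma Upos k' : (k'.+2 <= T)%N -> Ubar p k'.+2 s = p s * Ubar p k'.+1 s.
Proof.
move=> hk; rewrite /Ubar (_ : (T + k'.+2 = (T + k'.+1).+1)%N); last lia.
rewrite big_nat_recr /=; last lia.
rewrite (_ : maxn ((T + k'.+1).+1 - k'.+2) 1 = T)%N; last lia.
rewrite (_ : minn (T + k'.+1) T = T)%N; last lia.
have factor : forall i, (1 <= i < T + k'.+1)%N ->
  W (maxn (i.+1 - k'.+2) 1) (minn i T) =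
  W (maxn (i.+1 - k'.+1) 1) (minn i T) * (if (k'.+2 <= i)%N then rr R K T p s (i - k')%N else 1).
  move=> i hi; case: ifP => hki.
    rewrite (_ : maxn (i.+1 - k'.+2) 1 = (i - k').-1)%N; last lia.
    rewrite (_ : maxn (i.+1 - k'.+1) 1 = (i - k'))%N; last lia.
    have := @stepB R K T p s HM Hpos (i - k')%N (minn i T - (i - k'))%N _ _.
    by rewrite (_ : (i - k' + (minn i T - (i - k')) = minn i T)%N); [apply|lia]; lia.
  rewrite mulr1 (_ : maxn (i.+1 - k'.+2) 1 = 1)%N; last lia.
  by rewrite (_ : maxn (i.+1 - k'.+1) 1 = 1)%N; last lia.
rewrite (eq_big_nat _ _ factor) big_split /=.
have Hf : \prod_(1 <= i < T + k'.+1) (if (k'.+2 <= i)%N then rr R K T p s (i - k')%N else 1)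
   = \prod_(2 <= j < T.+1) rr R K T p s j.
  rewrite (big_cat_nat _ (n:=k'.+2)) /=; try lia.
  rewrite big_nat_cond big1; last first.
    by move=> i /andP[/andP[_ hi] _]; rewrite ifN //; lia.
  rewrite mul1r.
  rewrite (eq_big_nat _ _ (F2 := fun i => rr R K T p s (i - k')%N)); last first.
    by move=> i hi; rewrite ifT //; lia.
  rewrite (_ : k'.+2 = 2 + k')%N // big_addn.
  rewrite (_ : (T + k'.+1 - k' = T.+1)%N); last lia.
  by under eq_big_nat => i _ do rewrite addnK.
have Hps : p s = W T T * \prod_(2 <= j < T.+1) rr R K T p s j.
  have := @stepC R K T p s HM Hpos (T - 1)%N _; rewrite (_ : (T - (T - 1) = 1)%N); last lia.
  rewrite marg_full => ->; last lia.
  by [].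
rewrite Hf Hps.
ring.
Qed.
End M2.
Lemma Uzero (R : realType) (K T : nat) (p : spath K T -> R) (s : spath K T) k t :
  (forall x, 0 <= p x) -> (1 <= k)%N -> (1 <= t <= T)%N -> marg p s t t = 0 ->
  Ubar p k s = 0 /\ p s = 0.
Proof.
move=> p0 hk ht z.
have Z : forall m n, (m <= t <= n)%N -> marg p s m n = 0.
  move=> m n h; apply/eqP; rewrite eq_le marg_ge0 // andbT -z; exact: marg_mono.
split; last by rewrite -marg_full Z //; lia.
rewrite /Ubar (big_cat_nat _ (n:=t)) /=; try lia.
rewrite [X in _ * X]big_ltn; last lia.
by rewrite Z ?mul0r ?mulr0 //; lia.
Qed.

Theorem theorem3 (R : realType) (K T : nat) (p : spath K T -> R) (k : nat) :
  (1 < K)%N -> (1 <= T)%N ->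
  is_distribution p -> is_markov p ->
  (1 < k)%N -> (k <= T)%N ->
  forall s : spath K T,
    Rbar_k p k s = (Rbar_inf p s + Rbar_k p k.-1 s)%E.
Proof.
move=> _ _ [p0 _] HM hk hkT s.
have Ukey : Ubar p k s = p s * Ubar p k.-1 s.
  case: (boolP [exists t : 'I_T, marg p s t.+1 t.+1 == 0]).
  - case/existsP => t /eqP z.
    have [-> ->] := @Uzero R K T p s k t.+1 p0 (ltnW hk) (ltn_ord t) z.
    by rewrite mul0r.
  - move=> H.
    have Hpos : forall t, (1 <= t <= T)%N -> marg p s t t != 0.
      move=> t ht; apply/negP => z; move/negP: H; apply.
      have htT : (t.-1 < T)%N by lia.
      apply/existsP; exists (Ordinal htT).
      by rewrite /= prednK //; lia.
    case: k hk hkT => [|[|k']] //= hk hkT.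
    exact: Upos.
rewrite /Rbar_k /Rbar_inf /negloglik Ukey mulf_eq0.
have U0 : 0 <= Ubar p k.-1 s by apply: prodr_ge0 => i _; apply: marg_ge0.
have [->|ps0] := eqVneq (p s) 0; first by rewrite /=; case: ifP.
have [->|u0] := eqVneq (Ubar p k.-1 s) 0; first by [].
rewrite /=.
rewrite lnM ?posrE ?lt0r ?ps0 ?u0 ?p0 //.
by rewrite -EFinD mulrDr opprD.
Qed.
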